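(* Let $F$ be an arbitrary formal group law over $R$. For every $w\in W$ and every reduced word $I_w=(i_1,\dots,i_l)$ of $w$ we have in $Q_W$ $$\mathrm{ev}(\mathcal R^X_{I_w})=\delta_w,\qquad \mathrm{ev}(\mathcal R^Y_{I_w})=\theta_{I_w}\,\delta_w,$$ where $\theta_{I_w}:=\prod_{k=1}^{l}\theta(\beta_k)$ and $\theta(\lambda):=-\frac{x_{-\lambda}}{x_\lambda}$. Moreover $\theta_{I_w}$ depends only on $w$ and not on the choice of the reduced word $I_w$.
   Context: Let $R$ be a commutative ring and $F(x,y)\in R[[x,y]]$ a one-dimensional commutative formal group law over $R$. Let $\Phi$ be a finite (crystallographic, reduced) root system with weight lattice $\Lambda$, positive roots $\Phi^+$, negative roots $\Phi^-=-\Phi^+$, simple roots $\alpha_1,\dots,\alpha_n$, simple coroots $\alpha_i^\vee$, simple reflections $s_1,\dots,s_n$, Weyl group $W$ with length function $\ell$, Bruhat order $\le$ and longest element $w_\circ$; $m_{ij}$ denotes the order of $s_is_j$. The formal group algebra is $S=R[[y_\lambda]]_{\lambda\in\Lambda}/(y_0,\;y_{\lambda+\nu}-F(y_\lambda,y_\nu))$, on which $W$ acts by $w(y_\lambda)=y_{w\lambda}$. Whenever only one copy of $S$ is involved its generators are also written $x_\lambda:=y_\lambda$. Let $Q$ be the localization of $S$ at all $x_\alpha$, $\alpha\in\Phi$, and let $Q_W=Q\otimes_R R[W]$ be the twisted group algebra, a free left $Q$-module with basis $\{\delta_w\}_{w\in W}$ and multiplication $q\delta_w\cdot q'\delta_{w'}=q\,w(q')\,\delta_{ww'}$.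 Write $\delta_i=\delta_{s_i}$ and $x_{\pm i}=x_{\pm\alpha_i}$, and define the Demazure and push-pull elements $X_i=\frac{1}{x_i}(\delta_i-1)$ and $Y_i=\frac{1}{x_{-i}}+\frac{1}{x_i}\delta_i$ of $Q_W$. For a sequence $I=(i_1,\dots,i_l)$ set $X_I=X_{i_1}\cdots X_{i_l}$ and $Y_I=Y_{i_1}\cdots Y_{i_l}$. Let $Q_W[[\Lambda]]_F:=S\otimes_R Q_W$, where the generators of the left factor $S$ are written $y_\lambda$ and commute with all of $Q_W$ (whose coefficients are written in the variables $x_\lambda$); it is a left module over $S\otimes_R Q$. For $i\in\{1,\dots,n\}$ and $\lambda\in\Lambda$ set $h_i^Y(\lambda)=1-y_\lambda Y_i$ and $h_i^X(\lambda)=1+y_{-\lambda}X_i$. For $w\in W$ and a reduced word $I_w=(i_1,\dots,i_l)$ of $w$ (so $w=s_{i_1}\cdots s_{i_l}$, $l=\ell(w)$) let $\beta_k=s_{i_1}\cdots s_{i_{k-1}}\alpha_{i_k}$, $k=1,\dots,l$ (these are the elements of $\Phi^+\cap w\Phi^-$), and define the formal root polynomials $\mathcal R^Y_{I_w}=h^Y_{i_1}(\beta_1)h^Y_{i_2}(\beta_2)\cdots h^Y_{i_l}(\beta_l)$ and $\mathcal R^X_{I_w}=h^X_{i_1}(\beta_1)\cdots h^X_{i_l}(\beta_l)$ (products in this order). The evaluation map $\mathrm{ev}$ is the ring homomorphism $S\otimes_R Q\to Q$ with $y_\lambda\otimes 1\mapsto x_{-\lambda}$ and identity on $Q$, extended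 to the homomorphism of left $S\otimes_R Q$-modules $\mathrm{ev}:Q_W[[\Lambda]]_F\to Q_W$ (which fixes each element of $Q_W$ and sends $y_\lambda$ to $x_{-\lambda}$). *)

(* Defs.v *)
From HB Require Import structures.
From mathcomp Require Import all_boot all_order all_algebra.
Set Implicit Arguments. Unset Strict Implicit. Unset Printing Implicit Defensive.
Import Order.TTheory GRing.Theory Num.Theory.
Local Open Scope ring_scope.

(* Weights are column vectors 'cV[int]_n in the basis of fundamental  *)
(* weights; A i j = <alpha_i, alpha_j^vee>, so alpha_i = \col_j A i j *)
(* and s_i(lam) = lam - <lam, alpha_i^vee> alpha_i = lam - lam_i a_i. *)

Definition finite_cartan (n : nat) (A : 'M[int]_n) : Prop :=
  [/\ (forall i, A i i = 2),
      (forall i j, i != j -> A i j <= 0),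
      (forall i j, (A i j == 0) = (A j i == 0)) &
      exists d : 'I_n -> int,
        [/\ (forall i, 0 < d i),
            (forall i j, A i j * d j = A j i * d i) &
            (forall v : 'I_n -> rat, (exists i, v i != 0) ->
               0 < \sum_i \sum_j v i * (A i j * d j)%:~R * v j)]].

Definition alpha (n : nat) (A : 'M[int]_n) (i : 'I_n) : 'cV[int]_n :=
  \col_j A i j.

Definition sref (n : nat) (A : 'M[int]_n) (i : 'I_n) : 'M[int]_n :=
  \matrix_(j, k) ((j == k)%:R - A i j * (k == i)%:R).

Definition word_mx (n : nat) (A : 'M[int]_n) (I : seq 'I_n) : 'M[int]_n :=
  foldr (fun i M => sref A i *m M) 1%:M I.

Definition inW (n : nat) (A : 'M[int]_n) (w : 'M[int]_n) : Prop :=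
  exists I : seq 'I_n, w = word_mx A I.

Definition reduced_word (n : nat) (A : 'M[int]_n) (w : 'M[int]_n)
    (I : seq 'I_n) : Prop :=
  word_mx A I = w /\ forall J : seq 'I_n, word_mx A J = w -> (size I <= size J)%N.

(* beta_k = s_{i_1} ... s_{i_{k-1}} alpha_{i_k}, k = 1..l *)
Fixpoint betas (n : nat) (A : 'M[int]_n) (I : seq 'I_n) : seq 'cV[int]_n :=
  match I with
  | [::] => [::]
  | i :: I' => alpha A i :: map (fun b => sref A i *m b) (betas A I')
  end.

Section Algebras.
Variables (Q : comUnitRingType) (n : nat) (A : 'M[int]_n).
Variable act : 'M[int]_n -> {rmorphism Q -> Q}.
Variable x : 'cV[int]_n -> Q.

(* ---- twisted group algebra Q_W: finite formal sums  sum q delta_w  ---- *)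
Definition QW := seq (Q * 'M[int]_n).
Definition qw_coef (a : QW) (w : 'M[int]_n) : Q := \sum_(t <- a | t.2 == w) t.1.
Definition qw_eq (a b : QW) : Prop := forall w, qw_coef a w = qw_coef b w.
Definition qw_delta (w : 'M[int]_n) : QW := [:: (1, w)].
Definition qw_scale (q : Q) (a : QW) : QW := [seq (q * t.1, t.2) | t <- a].
Definition qw_mul (a b : QW) : QW :=
  [seq (t.1 * act t.2 u.1, t.2 *m u.2) | t <- a, u <- b].

Definition Xop (i : 'I_n) : QW :=
  [:: ((x (alpha A i))^-1, sref A i); (- (x (alpha A i))^-1, 1%:M)].
Definition Yop (i : 'I_n) : QW :=
  [:: ((x (- alpha A i))^-1, 1%:M); ((x (alpha A i))^-1, sref A i)].

(* Elements are represented by finite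
   sums of terms  y_{mu_1}...y_{mu_r} (x) q delta_w  (the y's central); the
   relations of S are not imposed -- ev below factors through them. ---- *)
Definition QWL := seq (seq 'cV[int]_n * (Q * 'M[int]_n)).
Definition qwl_one : QWL := [:: ([::], (1, 1%:M))].
Definition qwl_mul (a b : QWL) : QWL :=
  [seq (t.1 ++ u.1, (t.2.1 * act t.2.2 u.2.1, t.2.2 *m u.2.2)) | t <- a, u <- b].
Definition qwl_y (lam : 'cV[int]_n) (a : QW) : QWL := [seq ([:: lam], t) | t <- a].

Definition hY (i : 'I_n) (lam : 'cV[int]_n) : QWL :=
  qwl_one ++ qwl_y lam (qw_scale (-1) (Yop i)).
Definition hX (i : 'I_n) (lam : 'cV[int]_n) : QWL :=
  qwl_one ++ qwl_y (- lam) (Xop i).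

Definition rootpolyY (I : seq 'I_n) : QWL :=
  foldr (fun p acc => qwl_mul (hY p.1 p.2) acc) qwl_one (zip I (betas A I)).
Definition rootpolyX (I : seq 'I_n) : QWL :=
  foldr (fun p acc => qwl_mul (hX p.1 p.2) acc) qwl_one (zip I (betas A I)).

Definition ev (a : QWL) : QW :=
  [seq ((\prod_(mu <- t.1) x (- mu)) * t.2.1, t.2.2) | t <- a].

Definition theta (lam : 'cV[int]_n) : Q := - (x (- lam) / x lam).
Definition thetaI (I : seq 'I_n) : Q := \prod_(b <- betas A I) theta b.

End Algebras.

(* Main.v *)
Require Import Defs.
From HB Require Import structures.
From mathcomp Require Import all_boot all_order all_algebra.
From mathcomp Require Import ring zify.
From Stdlib Require Import Classical.
Import Order.TTheory GRing.Theory Num.Theory.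
Local Open Scope ring_scope.
Set Implicit Arguments. Unset Strict Implicit. Unset Printing Implicit Defensive.


Section Mat.
Variables (n : nat) (A : 'M[int]_n).

Lemma sref_def i : sref A i = 1%:M - alpha A i *m delta_mx 0 i.
Proof.
apply/matrixP => j k; rewrite !mxE big_ord1 !mxE eqxx /=.
by [].
Qed.

Lemma sref_mulE i m (M : 'M[int]_(n, m)) j k :
  (sref A i *m M) j k = M j k - A i j * M i k.
Proof.
rewrite sref_def mulmxBl mul1mx -mulmxA -rowE !mxE big_ord1 !mxE.
by [].
Qed.
End Mat.
Section Mat2.
Variables (n : nat) (A : 'M[int]_n).
Hypothesis A2 : forall i, A i i = 2.

Lemma sref_alpha i : sref A i *m alpha A i = - alpha A i.
Proof.
apply/matrixP => j k; rewrite sref_mulE !mxE A2.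
idtac.
by rewrite mulr2n; ring.
Qed.

Lemma sref2 i : sref A i *m sref A i = 1%:M.
Proof.
apply/matrixP => j k; rewrite sref_mulE !mxE A2.
by case: (eqVneq k i) => [->|_] /=; ring.
Qed.

Lemma word_mx_cat K J : word_mx A (K ++ J) = word_mx A K *m word_mx A J.
Proof.
elim: K => [|i K IH] /=; first by rewrite mul1mx.
by rewrite IH mulmxA.
Qed.

Lemma word_mx_cons i K : word_mx A (i :: K) = sref A i *m word_mx A K.
Proof. by []. Qed.

Lemma inW1 : inW A 1%:M. Proof. by exists [::]. Qed.
Lemma inW_sref i : inW A (sref A i). Proof. by exists [:: i]; rewrite /= mulmx1. Qed.
Lemma inW_mul u v : inW A u -> inW A v -> inW A (u *m v).
Proof. by move=> [K ->] [J ->]; exists (K ++ J); rewrite word_mx_cat. Qed.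
Lemma inW_word K : inW A (word_mx A K). Proof. by exists K. Qed.
End Mat2.
Section Roots.
Variables (n : nat) (A : 'M[int]_n).
Hypothesis A2 : forall i, A i i = 2.

Definition At := A^T.
Definition ev_ (i : 'I_n) : 'cV[int]_n := delta_mx i 0.

Lemma alphaE i : alpha A i = At *m ev_ i.
Proof. by rewrite /At /ev_ -colE; apply/matrixP => j k; rewrite !mxE. Qed.

Lemma sref_vec i (mu : 'cV[int]_n) : sref A i *m mu = mu - mu i 0 *: alpha A i.
Proof. apply/matrixP => j k; rewrite sref_mulE !mxE (ord1 k); ring. Qed.

Lemma mx_colP (M N : 'M[int]_n) : (forall k, M *m ev_ k = N *m ev_ k) -> M = N.
Proof.
move=> H; apply/matrixP => i k; have := congr1 (fun V : 'cV[int]_n => V i 0) (H k).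
by rewrite /ev_ -!colE !mxE.
Qed.

Lemma word_rev_l K : word_mx A (rev K) *m word_mx A K = 1%:M.
Proof.
elim: K => [|i K IH]; first by rewrite /= mulmx1.
rewrite rev_cons -cats1 word_mx_cat /= mulmx1 -mulmxA (mulmxA (sref A i)) sref2 //.
by rewrite mul1mx.
Qed.

Lemma word_rev_r K : word_mx A K *m word_mx A (rev K) = 1%:M.
Proof. by have := word_rev_l (rev K); rewrite revK. Qed.

Lemma word_rev_eq K J : word_mx A K = word_mx A J -> word_mx A (rev K) = word_mx A (rev J).
Proof.
move=> E.
by rewrite -[LHS]mulmx1 -(word_rev_r J) mulmxA -E word_rev_l mul1mx.
Qed.

Lemma det_sref i : \det (sref A i) = -1.
Proof.
rewrite (expand_det_row _ i) (bigD1 i) //= big1 ?addr0; last first.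
  move=> j nji; rewrite !mxE A2 eq_sym (negbTE nji) /=; ring.
rewrite !mxE A2 eqxx /cofactor.
have -> : row' i (col' i (sref A i)) = 1%:M.
  apply/matrixP => a b; rewrite !mxE (inj_eq lift_inj).
  by rewrite [lift i b == i]eq_sym (negbTE (neq_lift i b)) mulr0 subr0.
by rewrite det1 addnn -signr_odd odd_double /=; ring.
Qed.

Lemma det_word K : \det (word_mx A K) = (-1) ^+ size K.
Proof.
elim: K => [|i K IH] /=; first by rewrite det1.
by rewrite det_mulmx IH det_sref exprS.
Qed.

Lemma word_parity K J : word_mx A K = word_mx A J -> odd (size K) = odd (size J).
Proof.
move=> E; have := det_word K; rewrite E det_word -signr_odd -[(-1) ^+ size K]signr_odd.
by case: (odd (size J)); case: (odd (size K)) => //= H; move/eqP: H;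
  rewrite ?expr1 ?expr0 -?subr_eq0 ?opprK //= .
Qed.

End Roots.
Section Cartan.
Variables (n : nat) (A : 'M[int]_n).
Hypothesis HA : finite_cartan A.

Lemma At_inj (c : 'cV[int]_n) : At A *m c = 0 -> c = 0.
Proof.
move=> Hc; case: HA => _ _ _ [d [dpos dsym pd]].
apply/matrixP => j k; rewrite (ord1 k) [RHS]mxE.
apply/eqP/negPn/negP => nz.
have nz' : ((c j 0)%:~R : rat) != 0 by rewrite intr_eq0.
have := pd (fun i => (c i 0)%:~R) (ex_intro _ j nz').
have -> : \sum_i \sum_j0 (c i 0)%:~R * (A i j0 * d j0)%:~R * (c j0 0)%:~R
   = ((\sum_i \sum_j0 c i 0 * (A i j0 * d j0) * c j0 0 : int)%:~R : rat).
  rewrite rmorph_sum; apply: eq_bigr => i _; rewrite rmorph_sum; apply: eq_bigr => l _.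
  by rewrite !rmorphM.
rewrite exchange_big big1 ?ltxx //.
move=> l _.
have -> : \sum_i c i 0 * (A i l * d l) * c l 0 = (\sum_i A i l * c i 0) * (d l * c l 0).
  by rewrite mulr_suml; apply: eq_bigr => i _; ring.
have E : \sum_i A i l * c i 0 = 0.
  have := congr1 (fun V : 'cV[int]_n => V l 0) Hc; rewrite !mxE => H; apply: etrans H.
  by apply: eq_bigr => i _; rewrite /At mxE.
by rewrite E mul0r.
Qed.

Lemma sum2 (t t' : 'I_n) (f : 'I_n -> int) : t != t' ->
  (forall i, i != t -> i != t' -> f i = 0) -> \sum_i f i = f t + f t'.
Proof.
move=> ntt H; rewrite (bigD1 t) //= (bigD1 t') /=; last by rewrite eq_sym.
by rewrite big1 ?addr0 // => i /andP[nit' nit]; apply: H.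
Qed.

Lemma cartan_pq (t t' : 'I_n) : t != t' -> A t' t * A t t' < 4.
Proof.
move=> ntt; case: HA => A2 _ _ [d [dpos dsym pd]].
pose w i : int := if i == t then - (A t t' * d t') else if i == t' then 2 * d t else 0.
have wz : forall i, i != t -> i != t' -> w i = 0.
  by move=> i nit nit'; rewrite /w (negbTE nit) (negbTE nit').
have ntt' : (t' == t) = false by rewrite eq_sym (negbTE ntt).
have nz' : ((w t')%:~R : rat) != 0.
  by rewrite intr_eq0 /w ntt' eqxx; have := dpos t; lia.
have := pd (fun i => (w i)%:~R) (ex_intro _ t' nz').
have -> : \sum_i \sum_j0 (w i)%:~R * (A i j0 * d j0)%:~R * (w j0)%:~R
   = ((\sum_i \sum_j0 w i * (A i j0 * d j0) * w j0 : int)%:~R : rat).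
  rewrite rmorph_sum; apply: eq_bigr => i _; rewrite rmorph_sum; apply: eq_bigr => l _.
  by rewrite !rmorphM.
rewrite ltr0z.
rewrite (@sum2 t t') //; last first.
  by move=> i nit nit'; rewrite big1 // => l _; rewrite (wz i) // !mul0r.
rewrite (@sum2 t t') //; last by move=> i nit nit'; rewrite (wz i) // mulr0.
rewrite (@sum2 t t') //; last by move=> i nit nit'; rewrite (wz i) // mulr0.
rewrite /w !eqxx ntt' ?eqxx !A2.
have := dsym t t'; have := dpos t; have := dpos t'.
move=> H1 H2 H3.
set p := A t' t; set q := A t t'; set a := d t; set b := d t'.
set E := (X in 0 < X -> _).
have -> : E = (2 * a * a * b) * (4 - p * q) by rewrite /E; ring.
rewrite pmulr_rgt0; last by rewrite !mulr_gt0.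
rewrite subr_gt0; done.
Qed.

End Cartan.
Definition stepb (p q : int) (b : bool) (st : int * int * int * int) :=
  let: (xx, yy, P, Q) := st in
  if b then (- xx, yy - xx * q, P - xx, Q) else (xx - yy * p, - yy, P, Q - yy).
Definition runb p q (B : seq bool) st := foldr (stepb p q) st B.
Fixpoint altb (b : bool) (k : nat) : seq bool :=
  if k is k'.+1 then b :: altb (~~ b) k' else [::].
Definition PQ p q B (x0 y0 : int) : int * int :=
  let: (_, _, P, Q) := runb p q B (x0, y0, 0, 0) in (P, Q).
Definition mof (p q : int) : nat :=
  if p * q == 0 then 2 else if p * q == 1 then 3 else if p * q == 2 then 4 else 6.
Definition braid_ok p q := let m := mof p q in
  all (fun xy : int * int => PQ p q (altb true m.+1) xy.1 xy.2 == PQ p q (altb false m.-1) xy.1 xy.2)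
    [:: (0,0); (0,1); (1,0); (1,1)].
Definition pos_ok p q := let m := mof p q in
  all (fun k => let PQk := PQ p q (rev (altb false k)) 2 q in
       [&& 0 <= 1 + PQk.1, 0 <= PQk.2 & (1 + PQk.1 != 0) || (PQk.2 != 0)]) (iota 0 m).
Definition cases2 : seq (int * int) := [:: (0,0); (-1,-1); (-1,-2); (-2,-1); (-1,-3); (-3,-1)].

Lemma checks2 : all (fun pq => braid_ok pq.1 pq.2 && pos_ok pq.1 pq.2) cases2.
Proof. by vm_compute. Qed.

Lemma cases2P (p q : int) : p <= 0 -> q <= 0 -> (p == 0) == (q == 0) -> p * q < 4 ->
  (p, q) \in cases2.
Proof.
move=> hp hq hz hpq.
have bp : -3 <= p.
  case: (eqVneq q 0) => [q0|nq]; first by move: hz; rewrite q0 eqxx eqb_id => /eqP ->.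
  nia.
have bq : -3 <= q.
  case: (eqVneq p 0) => [p0|np]; first by move: hz; rewrite p0 eqxx eq_sym eqb_id => /eqP ->.
  nia.
have HP : [|| p == 0, p == -1, p == -2 | p == -3] by lia.
have HQ : [|| q == 0, q == -1, q == -2 | q == -3] by lia.
have : ((p == 0) == (q == 0)) ==> (p * q < 4) ==> ((p, q) \in cases2).
  by case/or4P: HP => /eqP ->; case/or4P: HQ => /eqP ->; vm_compute.
by rewrite hz hpq.
Qed.
Section Rank2.
Variables (n : nat) (A : 'M[int]_n).
Hypothesis A2 : forall i, A i i = 2.

Definition tw (t t' : 'I_n) (b : bool) := if b then t else t'.
Definition Iw (t t' : 'I_n) (U : seq 'I_n) := all (fun u => (u == t) || (u == t')) U.
Definition reduced (K : seq 'I_n) :=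
  forall J, word_mx A J = word_mx A K -> (size K <= size J)%N.
Definition Ired (t t' : 'I_n) (U : seq 'I_n) := Iw t t' U /\
  forall U', Iw t t' U' -> word_mx A U' = word_mx A U -> (size U <= size U')%N.

Lemma run_spec t t' : t != t' -> forall B (lam : 'cV[int]_n) xx yy P Q,
  runb (A t' t) (A t t') B (lam t 0, lam t' 0, 0, 0) = (xx, yy, P, Q) ->
  [/\ word_mx A (map (tw t t') B) *m lam = lam + P *: alpha A t + Q *: alpha A t',
      (word_mx A (map (tw t t') B) *m lam) t 0 = xx &
      (word_mx A (map (tw t t') B) *m lam) t' 0 = yy].
Proof.
move=> ntt; elim=> [|b B IH] lam xx yy P Q /=.
  by case=> <- <- <- <-; rewrite mul1mx !scale0r !addr0.
case E: (runb _ _ B _) => [[[x1 y1] P1] Q1].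
have [E1 E2 E3] := IH lam x1 y1 P1 Q1 E.
rewrite /stepb /tw; case: b => /=; case=> <- <- <- <-; rewrite -mulmxA; split.
- rewrite sref_vec E2 E1; apply/matrixP => j k; rewrite !mxE; ring.
- by rewrite sref_mulE E2 A2; ring.
- by rewrite sref_mulE E2 E3; ring.
- rewrite sref_vec E3 E1; apply/matrixP => j k; rewrite !mxE; ring.
- by rewrite sref_mulE E2 E3; ring.
- by rewrite sref_mulE E3 A2; ring.
Qed.

Lemma word_tw_eval t t' : t != t' -> forall B (lam : 'cV[int]_n),
  word_mx A (map (tw t t') B) *m lam =
  lam + (PQ (A t' t) (A t t') B (lam t 0) (lam t' 0)).1 *: alpha A t
      + (PQ (A t' t) (A t t') B (lam t 0) (lam t' 0)).2 *: alpha A t'.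
Proof.
move=> ntt B lam; rewrite /PQ; case E: runb => [[[xx yy] P] Q] /=.
by have [-> _ _] := run_spec ntt E.
Qed.

Lemma braid t t' : t != t' -> (A t' t, A t t') \in cases2 ->
  word_mx A (map (tw t t') (altb true (mof (A t' t) (A t t')).+1)) =
  word_mx A (map (tw t t') (altb false (mof (A t' t) (A t t')).-1)).
Proof.
move=> ntt Hc; apply: mx_colP => k; rewrite !word_tw_eval //.
have /andP[Hb _] := allP checks2 _ Hc.
have Hxy : (ev_ k t 0, ev_ k t' 0) \in [:: (0,0); (0,1); (1,0); (1,1)].
  by rewrite /ev_ !mxE; case: (t == k); case: (t' == k).
by move/allP: Hb => /(_ _ Hxy) /eqP ->.
Qed.

Lemma rank2_pos s s' : s != s' -> (A s' s, A s s') \in cases2 ->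
  forall k, (k < mof (A s' s) (A s s'))%N -> exists a b : int,
  [/\ 0 <= a, 0 <= b, (a != 0) || (b != 0) &
   word_mx A (map (tw s s') (rev (altb false k))) *m alpha A s = a *: alpha A s + b *: alpha A s'].
Proof.
move=> ntt Hc k Hk; rewrite word_tw_eval //.
have /andP[_ Hp] := allP checks2 _ Hc.
have Hk' : k \in iota 0 (mof (A s' s) (A s s')) by rewrite mem_iota.
move/allP: Hp => /(_ _ Hk'); rewrite !mxE A2 /=.
set PP := PQ _ _ _ _ _ => /and3P[h1 h2 h3].
exists (1 + PP.1), PP.2; split => //.
by rewrite scalerDl scale1r.
Qed.

Lemma alt_of_path t t' : t != t' -> forall L (b : bool), Iw t t' L ->
  path (fun a c => a != c) (tw t t' b) L -> L = map (tw t t') (altb (~~ b) (size L)).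
Proof.
move=> ntt; elim=> [|u L IH] b //= /andP[Hu HL] /andP[Hbu HP].
have Hu' : u = tw t t' (~~ b).
  by case/orP: Hu => /eqP Eu; subst u; case: b Hbu {HP} => /=; rewrite ?eqxx // eq_sym (negbTE ntt).
rewrite /= -Hu'; congr (_ :: _).
by rewrite {1}(IH (~~ b)) ?negbK // -Hu'.
Qed.

Lemma noadj_path (t : 'I_n) L : (forall L1 L2 u, t :: L <> L1 ++ u :: u :: L2) ->
  path (fun a c => a != c) t L.
Proof.
elim: L t => [|v L IH] t H //=; apply/andP; split.
  by apply/negP => /eqP E; apply: (H [::] L t); rewrite E.
by apply: IH => L1 L2 u E; apply: (H (t :: L1) L2 u); rewrite E.
Qed.

Lemma Ired_noadj t t' L : Ired t t' L -> forall L1 L2 u, L <> L1 ++ u :: u :: L2.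
Proof.
move=> [HI Hm] L1 L2 u E.
have Ew : word_mx A (L1 ++ L2) = word_mx A L.
  by rewrite E !word_mx_cat; congr (_ *m _); rewrite /= mulmxA sref2 // mul1mx.
have := Hm (L1 ++ L2).
rewrite Ew E size_cat /=.
have : Iw t t' (L1 ++ L2).
  by move: HI; rewrite E /Iw !all_cat /= => /andP[-> /and3P[_ _ ->]].
move=> H1 /(_ H1 erefl); rewrite size_cat; lia.
Qed.

Lemma Ired_rev t t' L : Ired t t' L -> Ired t t' (rev L).
Proof.
move=> [HI Hm]; split; first by rewrite /Iw all_rev.
move=> U' HU' E; rewrite size_rev -(size_rev U').
apply: Hm; first by rewrite /Iw all_rev.
by have := word_rev_eq A2 E; rewrite revK.
Qed.

Lemma Ired_catl t t' P S : Ired t t' (P ++ S) -> Ired t t' P.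
Proof.
move=> [HI Hm]; move: HI; rewrite /Iw all_cat => /andP[HP HS]; split => // U' HU' E.
have := Hm (U' ++ S); rewrite !word_mx_cat E !size_cat.
have HUS : Iw t t' (U' ++ S) by move: HU'; rewrite /Iw all_cat => ->.
move=> /(_ HUS erefl); lia.
Qed.

Lemma take_altb b j k : take j (altb b k) = altb b (minn j k).
Proof.
elim: k j b => [|k IH] [|j] b //=.
by rewrite IH minnSS.
Qed.

Lemma size_altb b k : size (altb b k) = k.
Proof. by elim: k b => [|k IH] b //=; rewrite IH. Qed.

End Rank2.
Section Rank2b.
Variables (n : nat) (A : 'M[int]_n).
Hypothesis A2 : forall i, A i i = 2.

Lemma Iw_map_tw (t t' : 'I_n) B : Iw t t' (map (tw t t') B).
Proof. by rewrite /Iw all_map; apply/allP => b _ /=; case: b; rewrite eqxx ?orbT. Qed.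

Lemma rank2_main (s s' : 'I_n) U : s != s' -> (A s' s, A s s') \in cases2 ->
  Ired A s s' (rcons U s) ->
  exists a b : int, [/\ 0 <= a, 0 <= b, (a != 0) || (b != 0) &
   word_mx A U *m alpha A s = a *: alpha A s + b *: alpha A s'].
Proof.
move=> ntt Hc HI.
have HR := Ired_rev A2 HI; rewrite rev_rcons in HR.
have Hpath : path (fun a c => a != c) s (rev U) by apply: noadj_path; apply: (Ired_noadj A2 HR).
have HIw : Iw s s' (rev U) by case: HR => /= /andP[].
have EU := @alt_of_path _ s s' ntt (rev U) true HIw Hpath; rewrite size_rev in EU.
set k := size U in EU.
have EU' : U = map (tw s s') (rev (altb false k)) by rewrite map_rev -EU revK.
have Hk : (k < mof (A s' s) (A s s'))%N.
  rewrite ltnNge; apply/negP => Hmk.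
  set m := mof _ _ in Hmk.
  have E1 : s :: rev U = map (tw s s') (altb true k.+1) by rewrite EU.
  rewrite E1 -(cat_take_drop m.+1 (map _ _)) in HR.
  have HT := Ired_catl HR.
  rewrite -map_take take_altb (minn_idPl _) ?ltnS // in HT.
  case: HT => _ /(_ _ (Iw_map_tw s s' (altb false m.-1))).
  rewrite -braid // !size_map !size_altb => /(_ erefl).
  rewrite /m /mof; case: ifP => _ //; case: ifP => _ //; case: ifP => _ //.
rewrite EU'; exact: rank2_pos.
Qed.

End Rank2b.
Lemma min_ex (P : nat -> Prop) m : P m -> exists m0, P m0 /\ forall k, (k < m0)%N -> ~ P k.
Proof.
elim/ltn_ind: m => m IH Pm.
case: (classic (exists k, (k < m)%N /\ P k)) => [[k [lt Pk]]|H]; first exact: IH lt Pk.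
by exists m; split => // k lt Pk; apply: H; exists k.
Qed.

Section TMain.
Variables (n : nat) (A : 'M[int]_n).
Hypothesis HA : finite_cartan A.

Lemma A2 i : A i i = 2. Proof. by case: HA. Qed.

Lemma cart_case (s s' : 'I_n) : s != s' -> (A s' s, A s s') \in cases2.
Proof.
move=> ns; case: HA => _ Hoff Hsym _.
apply: cases2P.
- by apply: Hoff; rewrite eq_sym.
- exact: Hoff.
- by rewrite Hsym.
- exact: cartan_pq.
Qed.

Definition pos (g : 'cV[int]_n) :=
  exists c : 'cV[int]_n, [/\ forall j, 0 <= c j 0, c != 0 & g = At A *m c].

Lemma nz_entry (c : 'cV[int]_n) : c != 0 -> exists j, c j 0 != 0.
Proof.
move=> nz; apply: NNPP => H; move/negP: nz; apply; apply/eqP/matrixP => j k.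
rewrite (ord1 k) mxE; apply/eqP; apply: NNPP => Hj; apply: H; exists j; exact/negP.
Qed.

Lemma pos_alpha i : pos (alpha A i).
Proof.
exists (ev_ i); split; last by rewrite alphaE.
  by move=> j; rewrite /ev_ mxE; case: (_ && _).
apply/negP => /eqP E; have := congr1 (fun V : 'cV[int]_n => V i 0) E.
by rewrite /ev_ !mxE !eqxx.
Qed.

Lemma pos_comb g1 g2 (a b : int) : pos g1 -> pos g2 -> 0 <= a -> 0 <= b ->
  (a != 0) || (b != 0) -> pos (a *: g1 + b *: g2).
Proof.
move=> [c1 [h1 n1 ->]] [c2 [h2 n2 ->]] ha hb hab.
exists (a *: c1 + b *: c2); split.
- move=> j; rewrite !mxE; apply: addr_ge0; apply: mulr_ge0 => //.
- case/orP: hab => hab.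
    have [j hj] := nz_entry n1; apply/negP => /eqP E.
    have := congr1 (fun V : 'cV[int]_n => V j 0) E; rewrite !mxE.
    have hx : 0 < c1 j 0 by have := h1 j; move: hj; lia.
    have ha' : 0 < a by move: hab ha; lia.
    move=> E'; suff : 0 < a * c1 j 0 + b * c2 j 0 by rewrite E' ltxx.
    by apply: (lt_le_trans (mulr_gt0 ha' hx)); rewrite lerDl mulr_ge0.
  have [j hj] := nz_entry n2; apply/negP => /eqP E.
  have := congr1 (fun V : 'cV[int]_n => V j 0) E; rewrite !mxE.
  have hx : 0 < c2 j 0 by have := h2 j; move: hj; lia.
  have hb' : 0 < b by move: hab hb; lia.
  move=> E'; suff : 0 < a * c1 j 0 + b * c2 j 0 by rewrite E' ltxx.
  by apply: (lt_le_trans (mulr_gt0 hb' hx)); rewrite lerDr mulr_ge0.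
- by rewrite mulmxDr !scalemxAr.
Qed.

Lemma reduced_catl P S : reduced A (P ++ S) -> reduced A P.
Proof.
move=> H J E; have := H (J ++ S); rewrite !word_mx_cat E !size_cat => /(_ erefl).
by rewrite leq_add2r.
Qed.

Lemma not_reduced K : ~ reduced A K -> exists J, word_mx A J = word_mx A K /\ (size J < size K)%N.
Proof.
move=> H; apply: NNPP => H'; apply: H => J E; rewrite leqNgt; apply/negP => lt.
by apply: H'; exists J.
Qed.

Lemma exists_reduced K : exists V, [/\ reduced A V, word_mx A V = word_mx A K & (size V <= size K)%N].
Proof.
have [m0 [[V [HV1 HV2]] Hmin]] :=
  @min_ex (fun m => exists V, size V = m /\ word_mx A V = word_mx A K) (size K) (ex_intro _ K (conj erefl erefl)).
exists V; split => //.
  move=> J E; rewrite leqNgt; apply/negP => lt; rewrite HV1 in lt.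
  by apply: (Hmin _ lt); exists J; split => //; rewrite E.
rewrite HV1 leqNgt; apply/negP => lt; apply: (Hmin _ lt); by exists K.
Qed.

Lemma sref_neq1 i : sref A i != 1%:M.
Proof.
apply/negP => /eqP E; have := sref_alpha A2 i; rewrite E mul1mx => /matrixP /(_ i 0).
rewrite !mxE A2 => /eqP; by [].
Qed.

Lemma word_rcons K i : word_mx A (rcons K i) = word_mx A K *m sref A i.
Proof. by rewrite -cats1 word_mx_cat /= mulmx1. Qed.

Theorem T_main N : forall K s, size K = N -> reduced A K -> reduced A (rcons K s) ->
  pos (word_mx A K *m alpha A s).
Proof.
elim/ltn_ind: N => N IH K s.
case/lastP: K => [|K' s'] HN HK HKs.
  by rewrite /= mul1mx; apply: pos_alpha.
have ns : s != s'.
  apply/negP => /eqP E; subst s'.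
  have := HKs K'; rewrite !word_rcons -mulmxA sref2 ?mulmx1 //; last exact: A2.
  by rewrite !size_rcons => /(_ erefl); lia.
set K := rcons K' s' in HK HKs HN *.
pose cand m := exists V U, [/\ size V = m, reduced A V, Ired A s s' U,
   word_mx A (V ++ U) = word_mx A K & (size V + size U = size K)%N].
have c0 : cand (size K').
  exists K', [:: s']; split => //.
  - by apply: (@reduced_catl _ [:: s']); rewrite cats1.
  - split; first by rewrite /Iw /= eqxx orbT.
    move=> U' _ E; case: U' E => //= E.
    by rewrite mulmx1 in E; move: (sref_neq1 s'); rewrite -E eqxx.
  - by rewrite cats1.
  - by rewrite size_rcons addn1.
have [m0 [[V [U [HV1 HV2 HU HVU HS]]] Hmin]] := min_ex c0.
have Hm0 : (m0 <= size K')%N by rewrite leqNgt; apply/negP => lt; exact: (Hmin _ lt c0).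
have sK : size K = (size K').+1 by rewrite size_rcons.
have red_t : forall t, (t == s) || (t == s') -> reduced A (rcons V t).
  move=> t Ht; apply: NNPP => Hn.
  have [J [EJ HJ]] := not_reduced Hn.
  have HJ' : (size J < size V)%N.
    have := word_parity A2 EJ; rewrite size_rcons /= in HJ *.
    move=> Hp; rewrite ltnS leq_eqVlt in HJ; case/orP: HJ => // /eqP HJ.
    by move: Hp; rewrite HJ /=; case: (odd (size V)).
  have [V2 [HV2r EV2 sV2]] := exists_reduced J.
  have EW : word_mx A (V2 ++ t :: U) = word_mx A K.
    rewrite word_mx_cat EV2 EJ word_rcons /= -mulmxA (mulmxA (sref A t)) sref2 ?mul1mx; last exact: A2.
    by rewrite -word_mx_cat.
  have HS2 : (size V2 + size (t :: U) = size K)%N.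
    apply/eqP; rewrite eqn_leq; apply/andP; split.
      by rewrite /= -HS; move: sV2 HJ'; lia.
    by have := HK _ EW; rewrite size_cat.
  apply: (Hmin (size V2)); first by lia.
  exists V2, (t :: U); split => //.
  case: HU => HIU HmU; split; first by rewrite /Iw /= Ht.
  move=> U' HU' EU'.
  have EW' : word_mx A (V2 ++ U') = word_mx A K by rewrite word_mx_cat EU' -word_mx_cat.
  have := HK _ EW'; move: HS2; rewrite size_cat /=; lia.
have IHs : forall t, (t == s) || (t == s') -> pos (word_mx A V *m alpha A t).
  move=> t Ht; apply: (IH m0) => //; first by lia.
  exact: red_t.
have HUs : Ired A s s' (rcons U s).
  case: HU => HIU HmU; split; first by rewrite /Iw all_rcons eqxx.
  move=> U' HU' EU'; rewrite leqNgt; apply/negP => lt.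
  have EW : word_mx A (V ++ U') = word_mx A (rcons K s).
    by rewrite word_mx_cat EU' word_rcons mulmxA -word_mx_cat HVU word_rcons.
  have := HKs _ EW; rewrite size_cat size_rcons; rewrite size_rcons in lt; lia.
have [a [b [ha hb hab Eab]]] := rank2_main A2 ns (cart_case ns) HUs.
rewrite -HVU word_mx_cat -mulmxA Eab mulmxDr -!scalemxAr.
apply: pos_comb => //; apply: IHs; by rewrite eqxx ?orbT.
Qed.
Definition neg (g : 'cV[int]_n) := pos (- g).
Definition root (g : 'cV[int]_n) := exists K i, g = word_mx A K *m alpha A i.
Definition Ninv K g := [/\ root g, pos g & neg (word_mx A (rev K) *m g)].

Lemma pos_neg_excl g : pos g -> neg g -> False.
Proof.
move=> [c1 [h1 n1 E1]] [c2 [h2 n2 E2]].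
have : At A *m (c1 + c2) = 0 by rewrite mulmxDr -E1 -E2 subrr.
move/(At_inj HA) => E.
have [j hj] := nz_entry n1.
have := congr1 (fun V : 'cV[int]_n => V j 0) E; rewrite !mxE => /eqP.
by rewrite paddr_eq0 // => /andP[/eqP c10 _]; move: hj; rewrite c10 eqxx.
Qed.

Lemma root_int g : root g -> exists c, g = At A *m c.
Proof.
move=> [K [i ->]]; elim: K => [|j K [c Ec]] /=; first by exists (ev_ i); rewrite mul1mx alphaE.
exists (c - ((At A *m c) j 0) *: ev_ j).
by rewrite -mulmxA Ec sref_vec alphaE mulmxBr scalemxAr.
Qed.

Lemma root_W K g : root g -> root (word_mx A K *m g).
Proof. by move=> [J [i ->]]; exists (K ++ J), i; rewrite word_mx_cat mulmxA. Qed.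

Lemma coherent g : root g -> pos g \/ neg g.
Proof.
move=> [K [i ->]].
have [V [HV EV sV]] := exists_reduced K.
rewrite -EV.
case: (classic (reduced A (rcons V i))) => Hr.
  by left; apply: (@T_main (size V)).
right.
have [J [EJ HJ]] := not_reduced Hr.
have HJ' : (size J < size V)%N.
  have := word_parity A2 EJ; rewrite size_rcons /= in HJ *.
  move=> Hp; rewrite ltnS leq_eqVlt in HJ; case/orP: HJ => // /eqP HJ.
  by move: Hp; rewrite HJ /=; case: (odd (size V)).
have [V' [HV' EV' sV']] := exists_reduced J.
have EVV : word_mx A V = word_mx A (rcons V' i).
  by rewrite word_rcons EV' EJ word_rcons -mulmxA sref2 ?mulmx1 //; exact: A2.
have Hr' : reduced A (rcons V' i).
  move=> J' EJ'; rewrite -EVV in EJ'; have := HV _ EJ'; rewrite size_rcons; lia.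
have := @T_main (size V') V' i erefl HV' Hr'.
by rewrite /neg EVV word_rcons -mulmxA sref_alpha ?mulmxN ?opprK //; exact: A2.
Qed.

Lemma key_prop i mu : root mu -> pos mu -> neg (sref A i *m mu) -> mu = alpha A i.
Proof.
move=> Hr [c [hc nc Ec]] [c' [hc' nc' Ec']].
have E0 : At A *m (c' + c - (mu i 0) *: ev_ i) = 0.
  by rewrite mulmxBr mulmxDr -Ec' -Ec -scalemxAr -alphaE sref_vec opprB subrK subrr.
move/(At_inj HA): E0 => E0.
have Hc : c = (c i 0) *: ev_ i.
  apply/matrixP => j k; rewrite (ord1 k) !mxE.
  case: (eqVneq j i) => [->|nji]; first by rewrite eqxx mulr1.
  have := congr1 (fun V : 'cV[int]_n => V j 0) E0; rewrite !mxE (negbTE nji) /= mulr0 subr0.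
  by have := hc j; have := hc' j; rewrite mulr0; lia.
have Emu : mu = c i 0 *: alpha A i by rewrite Ec {1}Hc -scalemxAr -alphaE.
have ci0 : 0 < c i 0.
  have := hc i; have : c i 0 != 0.
    by apply/negP => /eqP c0; move: nc; rewrite Hc c0 scale0r eqxx.
  lia.
case: Hr => K [m Em].
have [c'' Ec''] := root_int (root_W (rev K) (ex_intro _ [::] (ex_intro _ i erefl))).
rewrite /= mul1mx in Ec''.
have : alpha A m = c i 0 *: (At A *m c'').
  by rewrite -Ec'' scalemxAr -Emu Em mulmxA word_rev_l ?mul1mx //; exact: A2.
rewrite scalemxAr alphaE => /eqP; rewrite -subr_eq0 -mulmxBr => /eqP /(At_inj HA) E1.
have := congr1 (fun V : 'cV[int]_n => V m 0) E1; rewrite !mxE eqxx /=.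
move/eqP; rewrite subr_eq0 eq_sym => /eqP H2.
have ci1 : c i 0 = 1.
  have hz : 0 < c'' m 0.
    rewrite ltNge; apply/negP => H3.
    have : c i 0 * c'' m 0 <= 0 by rewrite pmulr_rle0.
    by rewrite H2.
  have : c i 0 <= c i 0 * c'' m 0 by rewrite ler_pMr // -(gtz0_ge1).
  rewrite H2 => H4; apply/eqP; rewrite eq_le H4 /=; exact: ci0.
by rewrite Emu ci1 scale1r.
Qed.

Lemma betas_rcons K i : betas A (rcons K i) = rcons (betas A K) (word_mx A K *m alpha A i).
Proof.
elim: K => [|j K IH] /=; first by rewrite mul1mx.
by rewrite IH map_rcons mulmxA.
Qed.

Lemma N_sub K g : Ninv K g -> g \in betas A K.
Proof.
elim/last_ind: K g => [|K i IH] g [Hr Hp Hn].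
  by exfalso; apply: (pos_neg_excl Hp); move: Hn; rewrite /= mul1mx.
rewrite betas_rcons mem_rcons in_cons.
move: Hn; rewrite rev_rcons /= -mulmxA => Hn.
have Hmu : root (word_mx A (rev K) *m g) by apply: root_W.
case: (coherent Hmu) => Hmu'.
  have := key_prop Hmu Hmu' Hn => E.
  apply/orP; left; apply/eqP.
  by rewrite -E mulmxA word_rev_r ?mul1mx //; exact: A2.
by apply/orP; right; apply: IH.
Qed.

Lemma N_sup K g : reduced A K -> g \in betas A K -> Ninv K g.
Proof.
elim/last_ind: K g => [|K i IH] g HK //.
have HK' : reduced A K by apply: (@reduced_catl _ [:: i]); rewrite cats1.
have HT := @T_main (size K) K i erefl HK' HK.
rewrite betas_rcons mem_rcons in_cons => /orP[/eqP ->|Hg].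
  split => //; first by exists K, i.
  rewrite /neg rev_rcons /= -mulmxA (mulmxA (word_mx A (rev K))) (word_rev_l A2) mul1mx.
  rewrite (sref_alpha A2) opprK; exact: pos_alpha.
have [Hr Hp Hn] := IH g HK' Hg.
split => //.
rewrite /neg rev_rcons /= -mulmxA.
have Hnu : root (sref A i *m (word_mx A (rev K) *m g)).
  by rewrite mulmxA; apply: (root_W (i :: rev K)).
case: (coherent Hnu) => // Hnu'.
exfalso.
have Hn' : neg (sref A i *m (sref A i *m (word_mx A (rev K) *m g))).
  by rewrite mulmxA sref2 ?mul1mx //; exact: A2.
have E := key_prop Hnu Hnu' Hn'.
have Emu : word_mx A (rev K) *m g = - alpha A i.
  by rewrite -(sref_alpha A2) -E mulmxA sref2 ?mul1mx //; exact: A2.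
have Eg : g = - (word_mx A K *m alpha A i).
  by rewrite -mulmxN -Emu mulmxA word_rev_r ?mul1mx //; exact: A2.
apply: (pos_neg_excl Hp); by rewrite /neg Eg opprK.
Qed.

Lemma betas_uniq K : reduced A K -> uniq (betas A K).
Proof.
elim/last_ind: K => [|K i IH] HK //.
have HK' : reduced A K by apply: (@reduced_catl _ [:: i]); rewrite cats1.
rewrite betas_rcons rcons_uniq IH // andbT.
apply/negP => Hin; have [_ _ Hn] := N_sup HK' Hin.
move: Hn; rewrite mulmxA word_rev_l ?mul1mx; last exact: A2.
by move=> Hn; apply: (pos_neg_excl (pos_alpha i) Hn).
Qed.

Lemma Ninv_eq K J g : word_mx A K = word_mx A J -> Ninv K g -> Ninv J g.
Proof. by move=> E [H1 H2 H3]; split => //; rewrite -(word_rev_eq A2 E). Qed.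

Theorem betas_perm I J : reduced A I -> reduced A J -> word_mx A I = word_mx A J ->
  perm_eq (betas A I) (betas A J).
Proof.
move=> HI HJ E; apply: uniq_perm; try exact: betas_uniq.
move=> g; apply/idP/idP => H.
  by apply: N_sub; apply: (Ninv_eq E); apply: N_sup.
by apply: N_sub; apply: (Ninv_eq (esym E)); apply: N_sup.
Qed.

End TMain.
Section Part1.
Variables (Q : comUnitRingType) (n : nat) (A : 'M[int]_n).
Variable act : 'M[int]_n -> {rmorphism Q -> Q}.
Variable x : 'cV[int]_n -> Q.
Hypothesis A2 : forall i, A i i = 2.
Hypothesis act1 : forall q, act 1%:M q = q.
Hypothesis actM : forall u v, inW A u -> inW A v -> forall q, act (u *m v) q = act u (act v q).
Hypothesis actx : forall w lam, inW A w -> act w (x lam) = x (w *m lam).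
Hypothesis xunit : forall w i, inW A w -> x (w *m alpha A i) \is a GRing.unit.

Definition evd (g : 'M[int]_n) (b : QWL Q n) : QW Q n :=
  [seq ((\prod_(mu <- u.1) x (- mu)) * act g u.2.1, g *m u.2.2) | u <- b].

Lemma coef_cat (a b : QW Q n) w : qw_coef (a ++ b) w = qw_coef a w + qw_coef b w.
Proof. by rewrite /qw_coef big_cat. Qed.

Lemma coef_delta (v w : 'M[int]_n) : qw_coef (qw_delta Q v) w = (v == w)%:R.
Proof. by rewrite /qw_coef big_cons big_nil /=; case: (v == w); rewrite ?addr0. Qed.

Lemma coef_scale c (a : QW Q n) w : qw_coef (qw_scale c a) w = c * qw_coef a w.
Proof. by rewrite /qw_coef /qw_scale big_map mulr_sumr. Qed.

Lemma evd_one (g : 'M[int]_n) b : evd g (qwl_mul act (qwl_one Q n) b) = evd g b.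
Proof.
rewrite /qwl_mul /qwl_one /= cats0 /evd -map_comp; apply: eq_map => u /=.
by rewrite act1 mul1r mul1mx.
Qed.

Lemma evd_y (g : 'M[int]_n) mu (c1 : Q) (h1 : 'M[int]_n) (c2 : Q) (h2 : 'M[int]_n) b : inW A g -> inW A h1 -> inW A h2 ->
  evd g (qwl_mul act (qwl_y mu [:: (c1, h1); (c2, h2)]) b) =
  qw_scale (x (- mu) * act g c1) (evd (g *m h1) b) ++
  qw_scale (x (- mu) * act g c2) (evd (g *m h2) b).
Proof.
move=> Wg W1 W2.
rewrite /qwl_mul /qwl_y /= cats0 /evd /qw_scale map_cat -!map_comp.
congr (_ ++ _); apply: eq_map => u /=; rewrite big_cons rmorphM actM // mulmxA;
  congr (_, _); ring.
Qed.

Lemma coef_evd_h (g : 'M[int]_n) mu (c1 : Q) (h1 : 'M[int]_n) (c2 : Q) (h2 : 'M[int]_n) b w : inW A g -> inW A h1 -> inW A h2 ->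
  qw_coef (evd g (qwl_mul act (qwl_one Q n ++ qwl_y mu [:: (c1, h1); (c2, h2)]) b)) w =
  qw_coef (evd g b) w + x (- mu) * act g c1 * qw_coef (evd (g *m h1) b) w
   + x (- mu) * act g c2 * qw_coef (evd (g *m h2) b) w.
Proof.
move=> Wg W1 W2.
rewrite {1}/qwl_mul allpairs_cat -/(qwl_mul act _ b) -/(qwl_mul act _ b).
rewrite /evd map_cat -/(evd g _) -/(evd g _) evd_one evd_y // !coef_cat !coef_scale.
by rewrite addrA.
Qed.

Definition RX (g : 'M[int]_n) (I : seq 'I_n) : QWL Q n :=
  foldr (fun p acc => qwl_mul act (hX A x p.1 p.2) acc) (qwl_one Q n)
    (zip I (map (fun b : 'cV[int]_n => g *m b) (betas A I))).
Definition RY (g : 'M[int]_n) (I : seq 'I_n) : QWL Q n :=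
  foldr (fun p acc => qwl_mul act (hY A x p.1 p.2) acc) (qwl_one Q n)
    (zip I (map (fun b : 'cV[int]_n => g *m b) (betas A I))).

Lemma map_betas_cons (g : 'M[int]_n) i I :
  map (fun b : 'cV[int]_n => g *m b) (betas A (i :: I)) = g *m alpha A i :: map (fun b : 'cV[int]_n => (g *m sref A i) *m b) (betas A I).
Proof. by rewrite /= -map_comp; congr (_ :: _); apply: eq_map => b /=; rewrite mulmxA. Qed.

Lemma RX_cons (g : 'M[int]_n) i I : RX g (i :: I) = qwl_mul act (hX A x i (g *m alpha A i)) (RX (g *m sref A i) I).
Proof. by rewrite /RX map_betas_cons. Qed.
Lemma RY_cons (g : 'M[int]_n) i I : RY g (i :: I) = qwl_mul act (hY A x i (g *m alpha A i)) (RY (g *m sref A i) I).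
Proof. by rewrite /RY map_betas_cons. Qed.

Lemma evd_base (g : 'M[int]_n) : evd g (qwl_one Q n) = qw_delta Q g.
Proof. by rewrite /evd /= big_nil rmorph1 mulr1 mulmx1. Qed.

Lemma xalpha_unit i : x (alpha A i) \is a GRing.unit.
Proof. by have := xunit i (inW1 A); rewrite mul1mx. Qed.
Lemma xnalpha_unit i : x (- alpha A i) \is a GRing.unit.
Proof. by have := xunit i (inW_sref A i); rewrite (sref_alpha A2). Qed.

Lemma RX_ev I : forall g : 'M[int]_n, inW A g -> forall w,
  qw_coef (evd g (RX g I)) w = qw_coef (qw_delta Q (g *m word_mx A I)) w.
Proof.
elim: I => [|i I IH] g Wg w.
  by rewrite /RX /= big_nil rmorph1 mulr1 mulmx1.
have Wgs : inW A (g *m sref A i) by apply: inW_mul => //; apply: inW_sref.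
rewrite RX_cons /hX /Xop coef_evd_h //; last by apply: inW1.
  2: by apply: inW_sref.
rewrite mulmx1 IH // word_mx_cons mulmxA opprK rmorphN.
rewrite rmorphV ?xalpha_unit // actx //.
have u := xunit i Wg.
rewrite mulrN mulrV //; ring.
Qed.

Definition thetag (g : 'M[int]_n) (I : seq 'I_n) := \prod_(b <- betas A I) theta x (g *m b).

Lemma thetag_cons (g : 'M[int]_n) i I :
  thetag g (i :: I) = theta x (g *m alpha A i) * thetag (g *m sref A i) I.
Proof.
rewrite /thetag /= big_cons big_map; congr (_ * _).
by apply: eq_bigr => b _; rewrite mulmxA.
Qed.

Lemma RY_ev I : forall g : 'M[int]_n, inW A g -> forall w,
  qw_coef (evd g (RY g I)) w = qw_coef (qw_scale (thetag g I) (qw_delta Q (g *m word_mx A I))) w.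
Proof.
elim: I => [|i I IH] g Wg w.
  by rewrite /RY coef_scale /= big_nil rmorph1 mulr1 mulmx1 /thetag big_nil mul1r.
have Wgs : inW A (g *m sref A i) by apply: inW_mul => //; apply: inW_sref.
rewrite coef_scale RY_cons /hY /Yop [qw_scale (-1) _]/qw_scale /= coef_evd_h //; last by apply: inW_sref.
  2: by apply: inW1.
rewrite mulmx1 IH // coef_scale !coef_delta mulmxA.
rewrite !mulNr !mul1r !rmorphN !rmorphV ?xalpha_unit ?xnalpha_unit // !actx //.
have u := xunit i Wg.
have u' : x (- (g *m alpha A i)) \is a GRing.unit.
  by have := xunit i Wgs; rewrite -mulmxA (sref_alpha A2) mulmxN.
rewrite mulmxN.
rewrite thetag_cons [theta x (g *m alpha A i)]/theta mulrN (mulrV u').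
ring.
Qed.

Lemma ev_evd1 b : ev x b = evd 1%:M b.
Proof. by apply: eq_map => u /=; rewrite act1 mul1mx. Qed.

Lemma map_mul1 (l : seq 'cV[int]_n) : map (fun b => 1%:M *m b) l = l.
Proof. by rewrite (eq_map (fun b => mul1mx b)) map_id. Qed.

Lemma RX1 I : RX 1%:M I = rootpolyX A act x I.
Proof. by rewrite /RX map_mul1. Qed.
Lemma RY1 I : RY 1%:M I = rootpolyY A act x I.
Proof. by rewrite /RY map_mul1. Qed.
Lemma thetag1 I : thetag 1%:M I = thetaI A x I.
Proof. by rewrite /thetag; apply: eq_bigr => b _; rewrite mul1mx. Qed.

End Part1.

Unset Implicit Arguments.

Theorem lemma3p2 (Q : comUnitRingType) (n : nat) (A : 'M[int]_n)
    (act : 'M[int]_n -> {rmorphism Q -> Q}) (x : 'cV[int]_n -> Q) :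
  finite_cartan A ->
  (forall q, act 1%:M q = q) ->
  (forall u v, inW A u -> inW A v -> forall q, act (u *m v) q = act u (act v q)) ->
  (forall w lam, inW A w -> act w (x lam) = x (w *m lam)) ->
  (forall w i, inW A w -> x (w *m alpha A i) \is a GRing.unit) ->
  forall (w : 'M[int]_n) (I : seq 'I_n), reduced_word A w I ->
    [/\ qw_eq (ev x (rootpolyX A act x I)) (qw_delta Q w),
        qw_eq (ev x (rootpolyY A act x I)) (qw_scale (thetaI A x I) (qw_delta Q w)) &
        forall J : seq 'I_n, reduced_word A w J -> thetaI A x J = thetaI A x I].
Proof.
move=> HA act1 actM actx xunit w I [EI HIm].
have HA2 := A2 HA.
have HIr : reduced A I by move=> J E; apply: HIm; rewrite E EI.
split.
- move=> v; rewrite (ev_evd1 x act1) -RX1 (RX_ev act1 actM actx xunit I (inW1 A) v).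
  by rewrite mul1mx EI.
- move=> v; rewrite (ev_evd1 x act1) -RY1 (RY_ev HA2 act1 actM actx xunit I (inW1 A) v).
  by rewrite mul1mx EI thetag1.
- move=> J [EJ HJm].
  have HJr : reduced A J by move=> K E; apply: HJm; rewrite E EJ.
  rewrite /thetaI; apply: perm_big; apply: (betas_perm HA HJr HIr).
  by rewrite EJ EI.
Qed.
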